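(* Fix integers $N\ge 2$ and $K\ge 1$. The class $M^{\text{RESCAL}}_{\lfloor N/32-1\rfloor}$ is not universal, i.e. $\pi(\mathcal{M}^{\text{RESCAL}}_{\lfloor N/32-1\rfloor})\ne\pi(\mathbb{R}^{N\times N\times K})$.
   Context: There are $N$ entities and $K$ relations. A score-based model assigns a score $s_k(i,j)\in\mathbb{R}$ to each triple, $i,j\in\{1,\dots,N\}$, $k\in\{1,\dots,K\}$; its scoring tensor $\mathcal{S}\in\mathbb{R}^{N\times N\times K}$ has frontal slices $\mathbf{S}_k$ with $[\mathbf{S}_k]_{ij}=s_k(i,j)$. For a real $N\times N$ matrix $\mathbf{S}$, $\pi(\mathbf{S})$ is the matrix of dense ranks: $\pi_{ij}(\mathbf{S})=1+$ (number of distinct values among entries of $\mathbf{S}$ strictly larger than $s_{ij}$). For tensors, $\pi$ acts slicewise; for a set $X$, $\pi(X)=\{\pi(x):x\in X\}$. RESCAL of size $r$: parameters $\mathbf{A}\in\mathbb{R}^{N\times r}$ (rows $\mathbf{a}_i$), $\mathbf{R}_1,\dots,\mathbf{R}_K\in\mathbb{R}^{r\times r}$, score $\mathbf{a}_i^T\mathbf{R}_k\mathbf{a}_j$; $\mathcal{M}^{\text{RESCAL}}_r$ is the set of scoring tensors of all such models. *)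

(* Defs.v *)
From mathcomp Require Import all_boot all_order all_algebra.
From mathcomp Require Import reals.
Set Implicit Arguments. Unset Strict Implicit. Unset Printing Implicit Defensive.
Import Order.TTheory GRing.Theory Num.Theory.
Local Open Scope ring_scope.

Definition tensor (R : Type) (N K : nat) := {ffun 'I_K -> 'M[R]_N}.

Definition entry_values (R : realType) (N : nat) (S : 'M[R]_N) : seq R :=
  undup [seq S i j | i <- enum 'I_N, j <- enum 'I_N].

Definition dense_rank (R : realType) (N : nat) (S : 'M[R]_N) : 'M[nat]_N :=
  \matrix_(i, j) (1 + count (fun v => (S i j < v)%R) (entry_values S))%N.

Definition tensor_rank (R : realType) (N K : nat) (T : tensor R N K)
  : tensor nat N K := [ffun k => dense_rank (T k)].

Definition rank_image (R : realType) (N K : nat) (X : tensor R N K -> Prop)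
  : tensor nat N K -> Prop :=
  fun P => exists T, X T /\ tensor_rank T = P.

(* M^RESCAL_r : scoring tensors with [S_k]_ij = a_i^T R_k a_j, i.e. S_k = A R_k A^T. *)
Definition rescal_class (R : realType) (N K r : nat) : tensor R N K -> Prop :=
  fun T => exists (A : 'M[R]_(N, r)) (Rk : 'I_K -> 'M[R]_r),
    T = [ffun k => A *m Rk k *m A^T].

Definition all_tensors (R : realType) (N K : nat) : tensor R N K -> Prop :=
  fun _ => True.

(* Main.v *)
Require Import Defs.
From mathcomp Require Import all_boot all_order all_algebra.
From mathcomp Require Import reals.
From mathcomp Require Import zify ring lra.
Import Order.TTheory GRing.Theory Num.Theory.
Local Open Scope ring_scope.

Lemma dense_rank_lt (R : realType) (N : nat) (S : 'M[R]_N) i j i' j' :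
  (S i j < S i' j')%R -> (dense_rank S i' j' < dense_rank S i j)%N.
Proof.
move=> lt.
rewrite !mxE !add1n ltnS.
set s := entry_values S.
have ins : S i' j' \in s.
  rewrite mem_undup; apply/allpairsP; exists (i', j').
  by rewrite !mem_enum.
have us : uniq s by apply: undup_uniq.
have := count_predUI (fun v => (S i' j' < v)%R) (pred1 (S i' j')) s.
have -> : count (predI (fun v => (S i' j' < v)%R) (pred1 (S i' j'))) s = 0%N.
  apply/eqP; rewrite -leqn0 -(count_pred0 s); apply: sub_count => v /=.
  by case/andP=> h /eqP e; rewrite e ltxx in h.
rewrite addn0 (count_uniq_mem _ us) ins => e; rewrite -addn1 -e.
apply: sub_count => v /=; case/orP=> [h|/eqP ->//].
exact: lt_trans h.
Qed.

Lemma dense_rank_eq (R : realType) (N : nat) (S : 'M[R]_N) i j i' j' :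
  dense_rank S i j = dense_rank S i' j' -> S i j = S i' j'.
Proof.
move=> e; case: (ltgtP (S i j) (S i' j')) => // h.
  by have := @dense_rank_lt _ _ S _ _ _ _ h; rewrite e ltnn.
by have := @dense_rank_lt _ _ S _ _ _ _ h; rewrite e ltnn.
Qed.

Lemma dense_rank_congr (R : realType) (N : nat) (S : 'M[R]_N) i j i' j' :
  S i j = S i' j' -> dense_rank S i j = dense_rank S i' j'.
Proof. by move=> e; rewrite !mxE e. Qed.

Theorem theorem6 (R : realType) (N K : nat) (hN : (2 <= N)%N) (hK : (1 <= K)%N) :
  rank_image (@rescal_class R N K (N %/ 32).-1)
  <> rank_image (@all_tensors R N K).
Proof.
move=> H.
pose Tid : tensor R N K := [ffun k => (1%:M : 'M[R]_N)].
have : rank_image (@all_tensors R N K) (tensor_rank Tid) by exists Tid.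
rewrite -H => -[T [[A [Rk ->]] Heq]].
pose k0 : 'I_K := Ordinal hK.
have Hk := congr1 (fun f : tensor nat N K => f k0) Heq.
rewrite /= /tensor_rank !ffunE in Hk.
set M := A *m Rk k0 *m A^T in Hk.
have eMdef : M = A *m Rk k0 *m A^T by [].
clearbody M.
have hN0 : (0 < N)%N by lia.
pose i0 : 'I_N := Ordinal hN0.
pose i1 : 'I_N := Ordinal hN.
have n01 : (i0 == i1) = false by [].
pose a := M i0 i0. pose b := M i0 i1.
have diag : forall i, M i i = a.
  move=> i; apply: dense_rank_eq; rewrite Hk; apply: dense_rank_congr.
  by rewrite !mxE !eqxx.
have off : forall i j, i != j -> M i j = b.
  move=> i j ij; apply: dense_rank_eq; rewrite Hk; apply: dense_rank_congr.
  by rewrite !mxE (negbTE ij) n01.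
have ab : a - b != 0.
  rewrite subr_eq0; apply/eqP => e.
  have : dense_rank (1%:M : 'M[R]_N) i0 i0 = dense_rank (1%:M : 'M[R]_N) i0 i1.
    by rewrite -Hk; apply: dense_rank_congr.
  move/dense_rank_eq; rewrite !mxE eqxx n01 /= => /eqP.
  by rewrite oner_eq0.
pose J : 'M[R]_N := (const_mx 1 : 'M[R]_(N, 1)) *m (const_mx 1 : 'M[R]_(1, N)).
have eM : (a - b) *: (1%:M : 'M[R]_N) = M + (- b) *: J.
  apply/matrixP => i j; rewrite !mxE big_ord1 !mxE mulr1.
  case: (eqVneq i j) => [<-|ij]; first by rewrite diag /= !mulr1.
  by rewrite off // /= mulr0 mulr1 subrr.
have rk : (N <= (N %/ 32).-1 + 1)%N.
  have := mxrank_add M ((- b) *: J).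
  rewrite -eM (mxrank_scale_nz _ ab) mxrank1 => h.
  apply: (leq_trans h); apply: leq_add.
    by rewrite eMdef -mulmxA; apply: (leq_trans (mxrankM_maxl _ _)); apply: rank_leq_col.
  by apply: (leq_trans (mxrank_scale _ _)); apply: mulmx_max_rank.
have : (N %/ 32 <= N %/ 2)%N by apply: leq_div2l.
have : (N %/ 2 * 2 <= N)%N by apply: leq_divM.
lia.
Qed.
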